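(* Every binary $t$-break-resilient code $\mathcal{C}\subseteq\{0,1\}^n$ satisfies $n-\log_2|\mathcal{C}|\ge \Omega\!\left(t\log \frac{n}{t}\right)$.
   Context: Breaking a binary string $\mathbf{x}\in\{0,1\}^n$ at $s\le t$ positions means choosing $s$ cut points between consecutive entries, producing $s+1$ consecutive substrings called fragments; fragments are oriented (read left to right as in $\mathbf{x}$) but given as an unordered multiset. A code $\mathcal{C}\subseteq\{0,1\}^n$ is a $t$-break-resilient code ($t$-BRC) if for any two distinct codewords $\mathbf{x},\mathbf{y}\in\mathcal{C}$, no choice of at most $t$ break positions in $\mathbf{x}$ and at most $t$ break positions in $\mathbf{y}$ yields the same multiset of fragments. The quantity $n-\log_2|\mathcal{C}|$ is the redundancy of $\mathcal{C}$; the $\Omega$ is asymptotic in $n$, with $t$ allowed to depend on $n$. *)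

(* Defs.v *)
From Stdlib Require Import Reals.
From mathcomp Require Import all_boot.
Set Implicit Arguments. Unset Strict Implicit. Unset Printing Implicit Defensive.

(* A set of break positions for a word of length n: S : {set 'I_n};
   i \in S means a cut between entries x_(i-1) and x_i (0-indexed),
   so position 0 is not a valid cut. *)
Definition valid_cuts (n : nat) (S : {set 'I_n}) : bool :=
  [forall i in S, 0 < nat_of_ord i].

Definition fragments (n : nat) (x : n.-tuple bool) (S : {set 'I_n}) : seq (seq bool) :=
  let p := sort leq [seq nat_of_ord i | i <- enum S] in
  pairmap (fun a b => take (b - a) (drop a (tval x))) 0 (rcons p n).

(* t-break-resilient code: for distinct codewords, no choice of at most t
   breaks in each yields the same multiset of fragments (multiset equality
   = perm_eq of the fragment lists). *)
Definition is_BRC (n t : nat) (C : {set n.-tuple bool}) : Prop :=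
  forall x y : n.-tuple bool, x \in C -> y \in C -> x != y ->
  forall Sx Sy : {set 'I_n},
    valid_cuts Sx -> valid_cuts Sy -> #|Sx| <= t -> #|Sy| <= t ->
    ~ perm_eq (fragments x Sx) (fragments y Sy).

(* Main.v *)
Require Import Defs.
From Stdlib Require Import Reals Lra Psatz.
From mathcomp Require Import all_boot.
From mathcomp Require Import zify.
Set Implicit Arguments. Unset Strict Implicit. Unset Printing Implicit Defensive.

Definition frag (w : seq bool) (cs : seq nat) : seq (seq bool) :=
  pairmap (fun a b => take (b - a) (drop a w)) 0 (rcons cs (size w)).

Lemma pm_ext_all (f g : nat -> nat -> seq bool) (x : nat) (s : seq nat) (P : pred nat) :
  P x -> all P s -> (forall a b, P a -> P b -> f a b = g a b) ->
  pairmap f x s = pairmap g x s.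
Proof.
elim: s x => //= y s IH x Px /andP[Py Ps] H.
by rewrite H // (IH y).
Qed.

Lemma pm_shift (U : Type) (f : nat -> nat -> U) d a s :
  pairmap f (d + a) (map (addn d) s) = pairmap (fun a b => f (d + a) (d + b)) a s.
Proof. by elim: s a => //= y s IH a; rewrite IH. Qed.

Lemma frag_cat w1 w2 cs1 cs2 :
  all (fun c => c <= size w1) cs1 ->
  frag (w1 ++ w2) (cs1 ++ size w1 :: map (addn (size w1)) cs2) = frag w1 cs1 ++ frag w2 cs2.
Proof.
move=> Hc; rewrite /frag size_cat.
have -> : rcons (cs1 ++ size w1 :: map (addn (size w1)) cs2) (size w1 + size w2)
   = rcons cs1 (size w1) ++ map (addn (size w1)) (rcons cs2 (size w2)).
  by rewrite map_rcons rcons_cat cat_rcons.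
rewrite pairmap_cat last_rcons; congr (_ ++ _).
  apply: (@pm_ext_all _ _ 0 _ (fun c => c <= size w1)) => //.
    by rewrite all_rcons leqnn.
  move=> a b Ha Hb; rewrite drop_cat.
  case: ltnP => Ha'.
    by rewrite takel_cat // size_drop; lia.
  have -> : a = size w1 by lia.
  have Hb0 : b - size w1 = 0 by lia.
  by rewrite Hb0 !take0.
  
rewrite -{1}(addn0 (size w1)) pm_shift.
apply: (@pm_ext_all _ _ 0 _ predT) => //; first by rewrite all_predT.
move=> a b _ _; rewrite drop_cat ltnNge leq_addr /= addKn subnDl //.
Qed.

Fixpoint gcuts (ps : seq (seq bool * seq nat)) : seq nat :=
  match ps with
  | [::] => [::]
  | p :: ps' =>
    match ps' with
    | [::] => p.2
    | _ => p.2 ++ size p.1 :: map (addn (size p.1)) (gcuts ps')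
    end
  end.

Lemma frag_gcuts ps : ps != [::] ->
  all (fun p => all (fun c => c <= size p.1) p.2) ps ->
  frag (flatten (map fst ps)) (gcuts ps) = flatten [seq frag p.1 p.2 | p <- ps].
Proof.
elim: ps => //= p ps IH _ /andP[Hp Hps].
case: ps IH Hps => [|q ps] IH Hps /=.
  by rewrite !cats0.
rewrite frag_cat //.
by move: IH => /= ->.
Qed.

Lemma path_gcuts ps : ps != [::] ->
  all (fun p => path ltn 0 (rcons p.2 (size p.1))) ps ->
  path ltn 0 (rcons (gcuts ps) (size (flatten (map fst ps)))).
Proof.
elim: ps => //= p ps IH _ /andP[Hp Hps].
case: ps IH Hps => [|q ps] IH Hps /=.
  by rewrite cats0.
set g := gcuts _.
rewrite size_cat rcons_cat rcons_cons -cat_rcons cat_path Hp last_rcons /=.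
rewrite -map_rcons -{1}(addn0 (size p.1)) path_map.
have := IH isT Hps; rewrite -/g /=.
apply: sub_path => a b /=; rewrite /relpre /= ltn_add2l //.
Qed.

Lemma size_gcuts ps :
  size (gcuts ps) = sumn [seq size p.2 | p <- ps] + (size ps).-1.
Proof.
elim: ps => //= p ps IH.
case: ps IH => [|q ps] IH /=.
  by rewrite !addn0.
rewrite size_cat /= size_map IH /=; lia.
Qed.

Lemma path_facts (l : seq nat) N : path ltn 0 (rcons l N) ->
  [/\ sorted ltn l, all (fun c => 0 < c) l & all (fun c => c < N) l].
Proof.
move=> H.
have Hs : sorted ltn (rcons l N) by apply: path_sorted H.
move: H; rewrite rcons_path => /andP[H _].
move: H; rewrite path_sortedE; last exact: ltn_trans.
move=> /andP[H1 H2]; split => //.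
move: Hs; rewrite sorted_pairwise; last exact: ltn_trans.
rewrite -cats1 pairwise_cat => /and3P[+ _ _].
by rewrite allrel1r.
Qed.

Lemma fragments_of n (x : n.-tuple bool) (l : seq nat) : path ltn 0 (rcons l n) ->
  [/\ valid_cuts [set i : 'I_n | val i \in l],
      #|[set i : 'I_n | val i \in l]| = size l &
      fragments x [set i : 'I_n | val i \in l] = frag x l].
Proof.
move=> /path_facts [Hs Hpos Hlt].
set S := [set i : 'I_n | val i \in l].
have Hperm : perm_eq [seq val i | i <- enum S] l.
  apply: uniq_perm.
  - by rewrite map_inj_uniq ?enum_uniq //; exact: val_inj.
  - exact: sorted_uniq ltn_trans ltnn _ Hs.
  move=> c; apply/mapP/idP => [[i]|Hc].
    by rewrite mem_enum inE => Hi ->.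
  have Hcn : c < n by move/allP: Hlt => /(_ c Hc).
  by exists (Ordinal Hcn); rewrite // mem_enum inE.
split.
- apply/forallP => i; apply/implyP; rewrite inE => Hi.
  by move/allP: Hpos => /(_ _ Hi).
- by rewrite cardE -(size_map val) (perm_size Hperm).
- rewrite /fragments /frag size_tuple; congr (pairmap _ _ (rcons _ _)).
  apply: (sorted_eq leq_trans anti_leq).
  + exact: sort_sorted leq_total _.
  + by move: Hs; rewrite ltn_sorted_uniq_leq => /andP[].
  + by rewrite perm_sort.
Qed.

Definition cx (p : seq bool * nat) : seq nat :=
  if (0 < p.2 < size p.1) then [:: p.2] else [::].
Definition cy (p : seq bool * nat) : seq nat :=
  if (0 < p.2 < size p.1) then [:: size p.1 - p.2] else [::].
Definition restp (r : seq bool) : seq (seq bool * seq nat) :=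
  if r is [::] then [::] else [:: (r, [::])].
Definition QX P r := [seq (p.1, cx p) | p <- P] ++ restp r.
Definition QY P r := [seq (rot p.2 p.1, cy p) | p <- P] ++ restp r.

Lemma frag0 s : frag s [::] = [:: s].
Proof. by rewrite /frag /= subn0 drop0 take_size. Qed.

Lemma frag1 s d : d <= size s -> frag s [:: d] = [:: take d s; drop d s].
Proof.
move=> Hd; rewrite /frag /= subn0 drop0; congr [:: _; _].
by rewrite take_oversize // size_drop.
Qed.

Lemma piece_perm p : perm_eq (frag p.1 (cx p)) (frag (rot p.2 p.1) (cy p)).
Proof.
case: p => s d; rewrite /cx /cy /=.
case: ifP => [/andP[H0 H1] | H].
  rewrite !frag1 ?size_rot ?leq_subr //; last exact: ltnW.
  have Hsz : size (drop d s) = size s - d by rewrite size_drop.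
  rewrite /rot -Hsz take_size_cat // drop_size_cat //.
  by rewrite perm_sym; apply/permP => q /=; rewrite !addn0 addnC.
rewrite !frag0.
have -> : rot d s = s; last exact: perm_refl.
case: (posnP d) => [-> | Hd]; first by rewrite rot0.
by apply: rot_oversize; move/negbT: H; rewrite Hd /= -leqNgt.
Qed.

Lemma flat_QX P r : flatten (map fst (QX P r)) = flatten (map fst P) ++ r.
Proof.
rewrite /QX map_cat flatten_cat -map_comp; case: r => [|b r] /=; first by rewrite cats0.
by rewrite cats0.
Qed.

Lemma flat_QY P r : flatten (map fst (QY P r)) = flatten [seq rot p.2 p.1 | p <- P] ++ r.
Proof.
rewrite /QY map_cat flatten_cat -map_comp; case: r => [|b r] /=; first by rewrite cats0.
by rewrite cats0.
Qed.

Lemma perm_flatten_map (A : Type) (f g : A -> seq (seq bool)) (s : seq A) :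
  (forall a, perm_eq (f a) (g a)) -> perm_eq (flatten (map f s)) (flatten (map g s)).
Proof. by move=> H; elim: s => //= a s IH; rewrite perm_cat. Qed.

Lemma perm_Q P r :
  perm_eq (flatten [seq frag q.1 q.2 | q <- QX P r]) (flatten [seq frag q.1 q.2 | q <- QY P r]).
Proof.
rewrite /QX /QY !map_cat !flatten_cat perm_cat2r -!map_comp.
exact: perm_flatten_map (fun p => piece_perm p).
Qed.

Lemma sumn_cx P : sumn [seq size (cx p) | p <- P] <= size P.
Proof.
elim: P => //= p P IH.
have : size (cx p) <= 1 by rewrite /cx; case: ifP.
lia.
Qed.
Lemma sumn_cy P : sumn [seq size (cy p) | p <- P] <= size P.
Proof.
elim: P => //= p P IH.
have : size (cy p) <= 1 by rewrite /cy; case: ifP.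
lia.
Qed.

Lemma size_restp r : size (restp r) = (r != [::]).
Proof. by case: r. Qed.

Lemma collide n t (x y : n.-tuple bool) P r :
  P != [::] -> all (fun p => 0 < size p.1) P ->
  (2 * size P).-1 + (r != [::]) <= t ->
  tval x = flatten (map fst P) ++ r ->
  tval y = flatten [seq rot p.2 p.1 | p <- P] ++ r ->
  exists Sx Sy : {set 'I_n}, [/\ valid_cuts Sx, valid_cuts Sy, #|Sx| <= t, #|Sy| <= t &
    perm_eq (fragments x Sx) (fragments y Sy)].
Proof.
move=> HP Hsz Ht Hx Hy.
have HQX : QX P r != [::] by rewrite /QX; move: HP; case: (P).
have HQY : QY P r != [::] by rewrite /QY; move: HP; case: (P).
have Hrest : all (fun p => path ltn 0 (rcons p.2 (size p.1))) (restp r).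
  by case: (r) => //= b r0; rewrite andbT.
have Hrest' : all (fun p => all (fun c => c <= size p.1) p.2) (restp r).
  by case: (r).
have PX : path ltn 0 (rcons (gcuts (QX P r)) n).
  rewrite -(size_tuple x) Hx -flat_QX; apply: path_gcuts => //.
  rewrite /QX all_cat Hrest andbT all_map; apply/allP => p /(allP Hsz) /= Hp.
  by rewrite /cx; case: ifP => /= [/andP[H1 H2] | _]; rewrite ?H1 ?H2 ?Hp.
have PY : path ltn 0 (rcons (gcuts (QY P r)) n).
  rewrite -(size_tuple y) Hy -flat_QY; apply: path_gcuts => //.
  rewrite /QY all_cat Hrest andbT all_map; apply/allP => p /(allP Hsz) /= Hp.
  rewrite /cy size_rot; case: ifP => /= [/andP[H1 H2] | _]; last by rewrite Hp.
  rewrite andbT; apply/andP; split; lia.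
have [VX CX FX] := fragments_of x PX.
have [VY CY FY] := fragments_of y PY.
exists [set i : 'I_n | val i \in gcuts (QX P r)], [set i : 'I_n | val i \in gcuts (QY P r)].
split => //.
- rewrite CX size_gcuts /QX map_cat sumn_cat size_cat size_map size_restp.
  have -> : sumn [seq size q.2 | q <- [seq (p.1, cx p) | p <- P]] = sumn [seq size (cx p) | p <- P] by rewrite -map_comp.
  have -> : sumn [seq size p.2 | p <- restp r] = 0 by case: (r).
  have := sumn_cx P; have : 0 < size P by move: HP; case: (P).
  move: Ht; case: (r != [::]) => /=; lia.
- rewrite CY size_gcuts /QY map_cat sumn_cat size_cat size_map size_restp.
  have -> : sumn [seq size q.2 | q <- [seq (rot p.2 p.1, cy p) | p <- P]] = sumn [seq size (cy p) | p <- P] by rewrite -map_comp.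
  have -> : sumn [seq size p.2 | p <- restp r] = 0 by case: (r).
  have := sumn_cy P; have : 0 < size P by move: HP; case: (P).
  move: Ht; case: (r != [::]) => /=; lia.
- rewrite FX FY Hx Hy -flat_QX -flat_QY !frag_gcuts //; first exact: perm_Q.
  + rewrite /QY all_cat Hrest' andbT all_map; apply/allP => p _ /=.
    by rewrite /cy size_rot; case: ifP => //= _; rewrite leq_subr.
  + rewrite /QX all_cat Hrest' andbT all_map; apply/allP => p _ /=.
    by rewrite /cx; case: ifP => //= /andP[_ /ltnW ->].
Qed.

Section Test.
Variables (k L : nat).
Definition RR := {ffun 'I_k -> 'I_L}.
Lemma fam_card (A : 'I_k -> {set 'I_L}) (w : 'I_k -> nat) :
  (forall i, #|A i| <= w i) ->
  #|[set r : RR | [forall i, r i \in A i]]| <= \prod_(i < k) w i.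
Proof.
move=> H.
have -> : #|[set r : RR | [forall i, r i \in A i]]| = #|(family (fun i => mem (A i)) : simpl_pred RR)|.
  apply: eq_card => r; rewrite inE; apply/forallP/familyP => Hr i; exact: Hr.
rewrite card_family foldrE big_image.
apply: leq_prod => i _; exact: H.
Qed.
End Test.

Lemma rot_fix_nth (s : seq bool) j i : rot j s = s -> j <= i -> i < size s ->
  nth false s i = nth false s (i - j).
Proof.
move=> Hr Hji His.
rewrite -{2}Hr /rot nth_cat size_drop.
have -> : i - j < size s - j by lia.
by rewrite nth_drop subnKC.
Qed.

Lemma fix_take_inj (s1 s2 : seq bool) j : 0 < j -> size s1 = size s2 ->
  rot j s1 = s1 -> rot j s2 = s2 -> take j s1 = take j s2 -> s1 = s2.
Proof.
move=> Hj Hsz H1 H2 Ht.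
apply: (eq_from_nth (x0 := false) Hsz) => i.
have [N] := ubnP i; elim: N i => // N IH i HiN Hi.
case: (ltnP i j) => Hij.
  by rewrite -(nth_take _ Hij s1) -(nth_take _ Hij s2) Ht.
rewrite (rot_fix_nth H1 Hij Hi) (rot_fix_nth H2 Hij) -?Hsz //.
apply: IH; lia.
Qed.

Lemma card_fix (L j : nat) : 0 < j < L ->
  #|[set s : L.-tuple bool | rot j s == s]| <= 2 ^ (L./2).
Proof.
move=> /andP[Hj0 HjL].
set F := [set s : L.-tuple bool | rot j s == s].
have [j' [Hj'0 Hj'h Hfix]] : exists j', [/\ 0 < j', j' <= L./2 &
    forall s : L.-tuple bool, s \in F -> rot j' s = s].
  case: (leqP j (L - j)) => Hc.
    exists j; split => //; first by rewrite geq_half_double -muln2; lia.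
    by move=> s; rewrite inE => /eqP.
  exists (L - j); split; [lia | rewrite geq_half_double -muln2; lia | ].
  move=> s; rewrite inE => /eqP Hs.
  by have := rotK j s; rewrite Hs /rotr size_tuple.
have Hj'L : j' <= L.
  apply: leq_trans Hj'h _; rewrite -{2}(odd_double_half L) -addnn; lia.
pose f (s : L.-tuple bool) : j'.-tuple bool := insubd (nseq_tuple j' false) (take j' s).
have Hinj : {in F &, injective f}.
  move=> s1 s2 H1 H2 Hf.
  apply: val_inj; apply: (@fix_take_inj _ _ j') => //; first by rewrite !size_tuple.
  - exact: Hfix.
  - exact: Hfix.
  move: (congr1 val Hf); rewrite /f !val_insubd !size_takel ?size_tuple //.
  by rewrite eqxx.
rewrite -(card_in_imset Hinj).
apply: leq_trans (max_card _) _.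
rewrite card_tuple card_bool.
by apply: leq_pexp2l.
Qed.

Definition periodic L (s : L.-tuple bool) : bool :=
  [exists j : 'I_L, (0 < j) && (rot j s == s)].
Definition wt L (s : L.-tuple bool) : nat := if periodic s then L else 1.

Lemma arith16 d : (2 * (d + 8) + 1) ^ 2 <= 3 * 2 ^ (d + 8).
Proof.
elim: d => [|d IH]; first by [].
have -> : 2 ^ (d.+1 + 8) = 2 * 2 ^ (d + 8) by rewrite addSn expnS.
move: IH; set X := 2 ^ (d + 8); rewrite !expnS !expn0; nia.
Qed.

Lemma arithL L : 16 <= L -> L * (L * 2 ^ (L./2)) <= 3 * 2 ^ L.
Proof.
move=> HL.
set h := L./2.
have HLh : L = odd L + h.*2 by rewrite odd_double_half.
have Hh : 8 <= h by rewrite /h geq_half_double -muln2; lia.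
have H1 : L * L <= 3 * 2 ^ h.
  have := arith16 (h - 8); rewrite subnK //.
  move: HLh; case: (odd L) => /= HLh; rewrite -muln2 in HLh; nia.
have -> : 2 ^ L = 2 ^ h * 2 ^ (L - h) by rewrite -expnD subnKC // HLh; case: (odd L) => /=; rewrite -addnn; lia.
have : 2 ^ h <= 2 ^ (L - h) by apply: leq_pexp2l => //; rewrite HLh; case: (odd L) => /=; rewrite -addnn; lia.
move: H1; set A := 2 ^ h; set B := 2 ^ (L - h); nia.
Qed.

Lemma sum_wt L : 16 <= L -> \sum_(s : L.-tuple bool) wt s <= 4 * 2 ^ L.
Proof.
move=> HL.
apply: (@leq_trans (\sum_(s : L.-tuple bool) (1 + L * \sum_(j : 'I_L | 0 < j) (rot j s == s)))).
  apply: leq_sum => s _; rewrite /wt; case: ifP => // /existsP [j /andP[Hj Hr]].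
  rewrite (bigD1 j) //= Hr; lia.
rewrite big_split /= -big_distrr /= exchange_big /=.
have Hc : forall j : 'I_L, \sum_(s : L.-tuple bool) (rot j s == s) = #|[set s : L.-tuple bool | rot j s == s]|.
  move=> j; rewrite -sum1_card [RHS]big_mkcond /=; apply: eq_bigr => s _; rewrite inE; by case: eqP.
have Hs : \sum_(j : 'I_L | 0 < j) \sum_(s : L.-tuple bool) (rot j s == s) <= L * 2 ^ (L./2).
  apply: (@leq_trans (\sum_(j : 'I_L) 2 ^ (L./2))).
    apply: (@leq_trans (\sum_(j : 'I_L | 0 < j) 2 ^ (L./2))).
      apply: leq_sum => j Hj; rewrite Hc; apply: card_fix; by rewrite Hj ltn_ord.
    by rewrite [X in _ <= X](bigID (fun j : 'I_L => 0 < j)) /= leq_addr.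
  by rewrite sum_nat_const card_ord.
have H1 : \sum_(s : L.-tuple bool) 1 = 2 ^ L by rewrite sum1_card card_tuple card_bool.
rewrite H1.
have := arithL HL.
move: Hs; set S := \sum_(j | _) _; set A := 2 ^ L; set B := 2 ^ (L./2); nia.
Qed.

Lemma two_rots L (v : L.-tuple bool) (s : seq bool) (a b : 'I_L) :
  size s = L -> rot a s = v -> rot b s = v -> a < b -> periodic v.
Proof.
move=> Hs Ha Hb Hab.
have Hba : b - a < L by have := ltn_ord b; lia.
apply/existsP; exists (Ordinal Hba); rewrite /= subn_gt0 Hab /=; apply/eqP.
rewrite -{1}Ha -rotD ?subnK // ?Hs; try exact: ltnW.
Qed.

Section Count.
Variables (n t k L m : nat) (C : {set n.-tuple bool}).
Hypotheses (Hn : n = k * L + m) (HL : 16 <= L) (Hk : 0 < k)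
  (Ht : (2 * k).-1 + (m != 0) <= t) (HC : is_BRC t C).

Definition seg (x : seq bool) (i : nat) := take L (drop (i * L) x).
Definition tupL (s : seq bool) : L.-tuple bool := insubd (nseq_tuple L false) s.
Definition tupm (s : seq bool) : m.-tuple bool := insubd (nseq_tuple m false) s.
Definition key (p : n.-tuple bool * {ffun 'I_k -> 'I_L}) :
   {ffun 'I_k -> L.-tuple bool} * m.-tuple bool :=
  ([ffun i => tupL (rot (p.2 i) (seg p.1 i))], tupm (drop (k * L) p.1)).

Lemma size_seg (x : n.-tuple bool) (i : 'I_k) : size (seg x i) = L.
Proof.
rewrite /seg size_takel // size_drop size_tuple Hn.
have := ltn_ord i; move: (nat_of_ord i) => j Hj.
have : j.+1 * L <= k * L by apply: leq_mul.
rewrite mulSn; lia.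
Qed.

Lemma size_rest (x : n.-tuple bool) : size (drop (k * L) x) = m.
Proof. by rewrite size_drop size_tuple Hn addKn. Qed.

Lemma split_word (x : seq bool) j : flatten [seq seg x i | i <- iota 0 j] = take (j * L) x.
Proof.
elim: j => [|j IH]; first by rewrite take0.
by rewrite -addn1 iotaD map_cat flatten_cat IH /= cats0 mulnDl mul1n takeD.
Qed.

Lemma split_enum (x : seq bool) :
  flatten [seq seg x (val i) | i <- enum 'I_k] ++ drop (k * L) x = x.
Proof.
have -> : [seq seg x (val i) | i <- enum 'I_k] = [seq seg x i | i <- map val (enum 'I_k)]
  by rewrite -map_comp.
by rewrite val_enum_ord split_word cat_take_drop.
Qed.

Lemma tupLK s : size s = L -> val (tupL s) = s.
Proof. by move=> Hs; rewrite val_insubd Hs eqxx. Qed.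
Lemma tupmK s : size s = m -> val (tupm s) = s.
Proof. by move=> Hs; rewrite val_insubd Hs eqxx. Qed.

Lemma keyeq x x' r r' : key (x, r) = key (x', r') -> x \in C -> x' \in C -> x = x'.
Proof.
move=> Hkey HxC Hx'C; apply/eqP; apply/negPn/negP => Hne.
case: Hkey => Hf Hr.
have Hseg : forall i : 'I_k, rot (r i) (seg x i) = rot (r' i) (seg x' i).
  move=> i; have := congr1 (fun f : {ffun 'I_k -> L.-tuple bool} => tval (f i)) Hf.
  by rewrite /= !ffunE !tupLK // size_rot size_seg.
have Hrest : drop (k * L) x = drop (k * L) x'.
  by have := congr1 val Hr; rewrite !tupmK // size_rest.
pose d (i : 'I_k) := if (L - r' i) + r i <= L then (L - r' i) + r i else (L - r' i) + r i - L.
have Hd : forall i, rot (d i) (seg x i) = seg x' i.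
  move=> i.
  have <- : rot (L - r' i) (rot (r i) (seg x i)) = rot (d i) (seg x i).
    by rewrite rot_add_mod ?size_seg // ?leq_subr // ltnW.
  by rewrite Hseg; have := rotK (r' i) (seg x' i); rewrite /rotr size_rot size_seg.
pose P := [seq (seg x (val i), d i) | i <- enum 'I_k].
have HPs : size P = k by rewrite size_map size_enum_ord.
have H1 : P != [::] by rewrite -size_eq0 HPs; lia.
have H2 : all (fun p => 0 < size p.1) P.
  by apply/allP => p /mapP [i _ ->] /=; rewrite size_seg; lia.
have H3 : (2 * size P).-1 + (drop (k * L) x != [::]) <= t.
  by rewrite HPs -size_eq0 size_rest.
have H4 : tval x = flatten (map fst P) ++ drop (k * L) x.
  by rewrite -map_comp /= split_enum.
have H5 : tval x' = flatten [seq rot p.2 p.1 | p <- P] ++ drop (k * L) x.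
  rewrite -map_comp /=.
  rewrite (eq_map (g := fun i : 'I_k => seg x' i)); last by move=> i /=; exact: Hd.
  by rewrite Hrest split_enum.
have [Sx [Sy [V1 V2 C1 C2 Hp]]] := @collide n t x x' P (drop (k * L) x) H1 H2 H3 H4 H5.
exact: HC x x' HxC Hx'C Hne Sx Sy V1 V2 C1 C2 Hp.
Qed.

Lemma fiber (z : {ffun 'I_k -> L.-tuple bool} * m.-tuple bool) :
  #|[set p in [set p : n.-tuple bool * {ffun 'I_k -> 'I_L} | p.1 \in C] | key p == z]|
    <= \prod_(i < k) wt (z.1 i).
Proof.
set CP := [set p : n.-tuple bool * {ffun 'I_k -> 'I_L} | p.1 \in C].
case: (set_0Vmem [set p in CP | key p == z]) => [-> | [[x0 r0] Hp0]]; first by rewrite cards0.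
move: Hp0; rewrite !inE /= => /andP[Hx0C /eqP Hk0].
pose A (i : 'I_k) := [set j : 'I_L | rot j (seg x0 i) == val (z.1 i)].
pose Fam := [set r : {ffun 'I_k -> 'I_L} | [forall i, r i \in A i]].
have Hsub : [set p in CP | key p == z] \subset (fun r => (x0, r)) @: Fam.
  apply/subsetP => -[x r]; rewrite !inE /= => /andP[HxC /eqP Hkz].
  have Hx : x = x0 by apply: (@keyeq x x0 r r0) => //; rewrite Hkz Hk0.
  subst x; apply/imsetP; exists r => //.
  rewrite inE; apply/forallP => i; rewrite inE.
  by rewrite -Hkz /= ffunE tupLK ?size_rot ?size_seg.
apply: leq_trans (subset_leq_card Hsub) _.
apply: leq_trans (leq_imset_card _ _) _.
apply: fam_card => i.
rewrite /wt; case: ifP => Hper.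
  by apply: leq_trans (max_card _) _; rewrite card_ord.
rewrite leqNgt; apply/negP => /card_gt1P [j1 [j2 [H1 H2 Hne]]].
move: H1 H2; rewrite !inE => /eqP H1 /eqP H2.
case: (ltngtP j1 j2) => Hlt.
- by move: Hper; rewrite (two_rots (size_seg x0 i) H1 H2 Hlt).
- by move: Hper; rewrite (two_rots (size_seg x0 i) H2 H1 Hlt).
- by move: Hne; rewrite (val_inj Hlt) eqxx.
Qed.

Lemma count_main : #|C| * L ^ k <= 4 ^ k * 2 ^ n.
Proof.
set CP := [set p : n.-tuple bool * {ffun 'I_k -> 'I_L} | p.1 \in C].
have HCP : #|CP| = #|C| * L ^ k.
  have -> : CP = setX C setT by apply/setP => -[x r]; rewrite !inE andbT.
  by rewrite cardsX cardsT card_ffun !card_ord.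
have Hpart : #|CP| = \sum_(z : {ffun 'I_k -> L.-tuple bool} * m.-tuple bool)
                       #|[set p in CP | key p == z]|.
  rewrite -sum1_card (partition_big key xpredT) //=.
  apply: eq_bigr => z _; rewrite -sum1_card; apply: eq_bigl => p; rewrite !inE.
  by [].
rewrite -HCP Hpart.
apply: (@leq_trans (\sum_(z : {ffun 'I_k -> L.-tuple bool} * m.-tuple bool) \prod_(i < k) wt (z.1 i))).
  by apply: leq_sum => z _; exact: fiber.
rewrite -(pair_bigA _ (fun (f : {ffun 'I_k -> L.-tuple bool}) (_ : m.-tuple bool) => \prod_(i < k) wt (f i))) /=.
under eq_bigr do rewrite sum_nat_const card_tuple card_bool.
rewrite -big_distrr /= -(bigA_distr_bigA (fun (_ : 'I_k) (s : L.-tuple bool) => wt s)) /=.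
apply: (@leq_trans (2 ^ m * (\prod_(i < k) (4 * 2 ^ L)))).
  rewrite leq_mul2l; apply/orP; right; apply: leq_prod => i _; exact: sum_wt.
rewrite prod_nat_const card_ord Hn expnD expnMn mulnC -mulnA -expnM mulnC.
by rewrite (mulnC L k) mulnC.
Qed.
End Count.

Section RealFacts.
Local Open Scope R_scope.

Lemma INR_expn a b : INR (a ^ b)%N = INR a ^ b.
Proof.
elim: b => [|b IH]; first by rewrite expn0.
by rewrite expnS mult_INR IH.
Qed.

Lemma INR_muln a b : INR (a * b)%N = INR a * INR b.
Proof. exact: mult_INR. Qed.

Lemma ln_le' x y : (0 < x -> x <= y -> ln x <= ln y).
Proof.
move=> Hx Hxy; case: (Rle_lt_or_eq_dec _ _ Hxy) => H.
  by apply: Rlt_le; apply: ln_increasing.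
by rewrite H; apply: Rle_refl.
Qed.

Lemma ln_xm1 x : (0 < x -> ln x <= x - 1).
Proof. move=> Hx; have := exp_ineq1_le (ln x); rewrite exp_ln //; lra. Qed.

Lemma ln2_pos : (0 < ln 2).
Proof. rewrite -ln_1; apply: ln_increasing; lra. Qed.

Lemma ln2_lt1 : (ln 2 < 1).
Proof.
rewrite -[X in _ < X](ln_exp 1); apply: ln_increasing; first lra.
have := exp_ineq1 1; lra.
Qed.

Lemma ln4_ge1 : (1 <= ln 4).
Proof. rewrite -{1}(ln_exp 1); apply: ln_le'; [exact: exp_pos | have := exp_le_3; lra]. Qed.

Lemma ln4E : (ln 4 = 2 * ln 2).
Proof. have -> : 4 = 2 * 2 by lra. rewrite ln_mult; lra. Qed.

Lemma INR_pos a : (0 < a)%N -> 0 < INR a.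
Proof. by move=> Ha; apply: lt_0_INR; apply/ltP. Qed.

Lemma red_bound (n k L c : nat) : (0 < c)%N -> (4 <= L)%N -> (c * L ^ k <= 4 ^ k * 2 ^ n)%N ->
  (INR k * (ln (INR L) - ln 4) <= INR n - ln (INR c) / ln 2).
Proof.
move=> Hc HL H.
have HcR := INR_pos Hc.
have HLR : (4 <= INR L) by have := le_INR _ _ (elimT leP HL); rewrite /=; lra.
have H' : (INR c * INR L ^ k <= 4 ^ k * 2 ^ n).
  have := le_INR _ _ (elimT leP H); rewrite !INR_muln !INR_expn.
  have -> : INR 4 = 4 by rewrite /=; lra.
  have -> : INR 2 = 2 by rewrite /=; lra.
  by [].
have HLpos : 0 < INR L by lra.
have Hl := ln_le' (Rmult_lt_0_compat _ _ HcR (pow_lt _ k HLpos)) H'.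
rewrite !ln_mult ?ln_pow in Hl; try apply: pow_lt; try lra.
have Hl2 := ln2_pos; have Hl21 := ln2_lt1.
have HD : (0 <= ln (INR L) - ln 4).
  have H4 : 0 < 4 by lra.
  have := ln_le' H4 HLR; lra.
have Hk : (0 <= INR k) by apply: pos_INR.
set u := (ln (INR c) / ln 2).
have Hu : ln (INR c) = (u * ln 2) by rewrite /u; field; lra.
rewrite Hu in Hl.
have HDp : (0 <= INR k * (ln (INR L) - ln 4)) by apply: Rmult_le_pos.
rewrite ln4E in Hl HD HDp *.
nra.
Qed.

End RealFacts.

Lemma redund n t k L m (C : {set n.-tuple bool}) :
  n = k * L + m -> 16 <= L -> 0 < k -> (2 * k).-1 + (m != 0) <= t -> is_BRC t C ->
  0 < #|C| ->
  Rle (Rmult (INR k) (Rminus (ln (INR L)) (ln 4))) (Rminus (INR n) (Rdiv (ln (INR #|C|)) (ln 2))).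
Proof.
move=> Hn HL Hk Ht HC HC0.
apply: red_bound => //; first by apply: leq_trans HL.
exact: count_main Hn HL Hk Ht HC.
Qed.


Section Final.
Local Open Scope R_scope.

Lemma nat_le_R a b : (a <= b)%N -> INR a <= INR b.
Proof. by move=> H; apply: le_INR; apply/leP. Qed.

Lemma ln16 : ln 16 = 2 * ln 4.
Proof. have -> : 16 = 4 * 4 by lra. rewrite ln_mult; lra. Qed.
Lemma ln64 : ln 64 = 3 * ln 4.
Proof. have -> : 64 = 4 * (4 * 4) by lra. rewrite !ln_mult; lra. Qed.

Lemma theorem1_aux :
  exists (c : R) (N0 : nat), Rlt 0 c /\
    forall (n t : nat) (C : {set n.-tuple bool}),
      (N0 <= n)%N -> (0 < t)%N -> (0 < #|C|)%N -> is_BRC t C ->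
      Rle (Rmult (Rmult c (INR t)) (ln (Rdiv (INR n) (INR t)))) (Rminus (INR n) (Rdiv (ln (INR #|C|)) (ln 2))).
Proof.
exists (1/32), 64%N; split; first lra.
move=> n t C Hn Ht HC0 HC.
have Hl4 := ln4_ge1.
have HnR : 64 <= INR n.
  have := nat_le_R Hn; have -> : INR 64 = 64 by rewrite /=; lra. by [].
have HtR : 1 <= INR t by have := nat_le_R Ht.
case: (eqVneq t 1%N) => [Ht1 | Ht1].
  have E1 : n = (1 * n + 0)%N by lia.
  have E2 : (16 <= n)%N by lia.
  have E3 : ((2 * 1).-1 + (0 != 0) <= t)%N by rewrite Ht1.
  have Hr := @redund n t 1 n 0 C E1 E2 isT E3 HC HC0.
  subst t.
  have -> : INR n / INR 1 = INR n by rewrite /=; field.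
  have Hln : 3 * ln 4 <= ln (INR n) by rewrite -ln64; apply: ln_le'; lra.
  rewrite /= in Hr *; nra.
have Ht2 : (2 <= t)%N by lia.
case: (leqP t./2 (n %/ 16)) => Hcase.
- set k := t./2.
  have Hk : (0 < k)%N by rewrite half_gt0.
  have Hk2 : (k.*2 <= t <= k.*2.+1)%N.
    have := odd_double_half t; rewrite -/k; case: (odd t) => /= <-; lia.
  have H16k : (k * 16 <= n)%N.
    by apply: leq_trans (leq_divM n 16); rewrite leq_mul2r Hcase orbT.
  have HL : (16 <= n %/ k)%N by rewrite leq_divRL // mulnC.
  have Hm : (n %% k < k)%N by apply: ltn_pmod.
  have Hdec : n = (k * (n %/ k) + n %% k)%N by rewrite mulnC -divn_eq.
  have E3 : ((2 * k).-1 + (n %% k != 0) <= t)%N by case: (n %% k != 0%N); lia.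
  have Hr := @redund n t k (n %/ k) (n %% k) C Hdec HL Hk E3 HC HC0.
  set L := (n %/ k)%N in Hr HL Hdec Hm.
  have HnLt : (n <= L * t)%N by nia.
  have Htn : (t <= n)%N by lia.
  have Ht3 : (t <= 3 * k)%N by lia.
  have HnLtR := nat_le_R HnLt; rewrite mult_INR in HnLtR.
  have HtnR := nat_le_R Htn.
  have Ht3R := nat_le_R Ht3; rewrite mult_INR in Ht3R.
  have HLR := nat_le_R HL.
  replace (INR 3) with 3 in Ht3R by (simpl; lra).
  replace (INR 16) with 16 in HLR by (simpl; lra).
  have HkR : 0 <= INR k by apply: pos_INR.
  set q := INR n / INR t.
  have Hq : q * INR t = INR n by rewrite /q; field; lra.
  have Hq1 : 1 <= q by nra.
  have HqL : q <= INR L by nra.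
  have Hlq0 : 0 <= ln q by rewrite -ln_1; apply: ln_le'; lra.
  have HlqL : ln q <= ln (INR L) by apply: ln_le'; lra.
  have HlL : 2 * ln 4 <= ln (INR L) by rewrite -ln16; apply: ln_le'; lra.
  apply: Rle_trans Hr.
  have : 0 <= (3 * INR k - INR t) * ln q by apply: Rmult_le_pos; lra.
  have : 0 <= INR k * (ln (INR L) - ln q) by apply: Rmult_le_pos; lra.
  have : 0 <= INR k * (ln (INR L) - 2 * ln 4) by apply: Rmult_le_pos; lra.
  nra.
- set k := (n %/ 16)%N in Hcase.
  have Hk4 : (4 <= k)%N by rewrite /k leq_divRL.
  have Hk : (0 < k)%N by lia.
  have H16k : (k * 16 <= n)%N by apply: leq_divM.
  have Hnk : (n < k.+1 * 16)%N by apply: ltn_ceil.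
  have Ht2k : (k.*2.+2 <= t)%N.
    have := odd_double_half t; case: (odd t) => /=; lia.
  have HL : (16 <= n %/ k)%N by rewrite leq_divRL // mulnC.
  have Hdec : n = (k * (n %/ k) + n %% k)%N by rewrite mulnC -divn_eq.
  have E3 : ((2 * k).-1 + (n %% k != 0) <= t)%N by case: (n %% k != 0%N); lia.
  have Hr := @redund n t k (n %/ k) (n %% k) C Hdec HL Hk E3 HC HC0.
  set L := (n %/ k)%N in Hr HL.
  have Hn32 : (n <= 32 * k)%N by lia.
  have Hn32R := nat_le_R Hn32; rewrite mult_INR in Hn32R.
  replace (INR 32) with 32 in Hn32R by (simpl; lra).
  have HLR := nat_le_R HL.
  replace (INR 16) with 16 in HLR by (simpl; lra).
  have HkR : 0 <= INR k by apply: pos_INR.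
  set q := INR n / INR t.
  have Hq : q * INR t = INR n by rewrite /q; field; lra.
  have Hq0 : 0 < q by rewrite /q; apply: Rdiv_lt_0_compat; lra.
  have Hlq := ln_xm1 Hq0.
  have HlL : 2 * ln 4 <= ln (INR L) by rewrite -ln16; apply: ln_le'; lra.
  apply: Rle_trans Hr.
  have : 0 <= INR k * (ln (INR L) - 2 * ln 4) by apply: Rmult_le_pos; lra.
  have : INR t * ln q <= INR t * (q - 1) by apply: Rmult_le_compat_l; lra.
  have : 0 <= INR k * (ln 4 - 1) by apply: Rmult_le_pos; lra.
  nra.
Qed.

End Final.

Theorem theorem1 :
  exists (c : R) (N0 : nat), Rlt 0 c /\
    forall (n t : nat) (C : {set n.-tuple bool}),
      (N0 <= n)%N -> (0 < t)%N -> (0 < #|C|)%N -> is_BRC t C ->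
      Rle (Rmult (Rmult c (INR t)) (ln (Rdiv (INR n) (INR t)))) (Rminus (INR n) (Rdiv (ln (INR #|C|)) (ln 2))).
Proof. exact: theorem1_aux. Qed.
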